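(* Let $K$ be a positive semiring, let $k\ge1$ and $d\ge2$ be integers, and let $H=(V,E)$ be a $k$-uniform, $d$-regular hypergraph with distinct hyperedges $X_1,\ldots,X_m$, where the vertices are attributes whose domains all contain $\{0,1,\ldots,d-1\}$. For $i\in[m]$ let $R_i$ be the $K$-relation over $X_i$ such that $R_i(t)=1$ if $t$ takes values in $\{0,\ldots,d-1\}$ and $\sum_{C\in X_i}t(C)\equiv \delta_i \pmod d$, and $R_i(t)=0$ otherwise, where $\delta_i=0$ for $i\neq m$ and $\delta_m=1$. Then the collection $R_1,\ldots,R_m$ is pairwise consistent but not globally consistent.
   Context: A commutative semiring $(K,+,\cdot,0,1)$ with $0\neq 1$ is positive if $a+b=0$ implies $a=b=0$, and $ab=0$ implies $a=0$ or $b=0$. For a finite set of attributes $X$, $\mathrm{Tup}(X)$ is the set of maps assigning to each $A\in X$ an element of its domain; $t[Y]$ is restriction; $XY=X\cup Y$. A $K$-relation over $X$ is a map $R:\mathrm{Tup}(X)\to K$ with finite support $R'=\{t:R(t)\neq0\}$; its marginal on $Y\subseteq X$ is $R[Y](u)=\sum_{r\in R',r[Y]=u}R(r)$. $R\equiv S$ means $aR=bS$ for nonzero $a,b\in K$. $R$ over $X$ and $S$ over $Y$ are consistent if some $K$-relation $T$ over $XY$ has $R\equiv T[X]$, $S\equiv T[Y]$. A collection $R_1,\dots,R_m$ ($R_i$ over $X_i$) is pairwise consistent if every two members are consistent, and globally consistent if some $K$-relation $T$ over $X_1\cup\cdots\cup X_m$ satisfies $R_i\equiv T[X_i]$ for all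 $i$. A hypergraph is $k$-uniform if every hyperedge has exactly $k$ vertices, and $d$-regular if every vertex lies in exactly $d$ hyperedges. *)

(* Defs.v *)
From HB Require Import structures.
From mathcomp Require Import all_boot all_order all_algebra.
Set Implicit Arguments. Unset Strict Implicit. Unset Printing Implicit Defensive.
Import GRing.Theory.
Local Open Scope ring_scope.

Definition positive_semiring (K : comNzSemiRingType) : Prop :=
  (forall a b : K, a + b = 0 -> a = 0 /\ b = 0) /\
  (forall a b : K, a * b = 0 -> a = 0 \/ b = 0).

Section KRel.
Variables (V : finType) (D : eqType) (dom : V -> D -> Prop) (K : comNzSemiRingType).

(* Attributes are the elements of V; all domains are subsets dom A of a universe D.
   A tuple over X is encoded as a map V -> option D that is Some v (v in dom A) on X
   and None outside X. *)
Definition tup := {ffun V -> option D}.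

Definition is_tup (X : {set V}) (t : tup) : Prop :=
  forall A, if A \in X then exists2 v, t A = Some v & dom A v else t A = None.

Definition restr (Y : {set V}) (t : tup) : tup :=
  [ffun A => if A \in Y then t A else None].

Record Krel (X : {set V}) := {
  krel :> tup -> K;
  ksupp : seq tup;
  ksuppP : forall t, krel t != 0 -> t \in ksupp;
  ktupP : forall t, krel t != 0 -> is_tup X t }.

Definition marg (X : {set V}) (T : Krel X) (Y : {set V}) : tup -> K :=
  fun u => \sum_(r <- undup (ksupp T) | restr Y r == u) T r.

Definition kequiv (f g : tup -> K) : Prop :=
  exists a b : K, [/\ a != 0, b != 0 & forall t, a * f t = b * g t].

Definition consistent (X : {set V}) (R : tup -> K) (Y : {set V}) (S : tup -> K) : Prop :=
  exists T : Krel (X :|: Y), kequiv R (marg T X) /\ kequiv S (marg T Y).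

Definition pairwise_consistent (m : nat) (X : 'I_m -> {set V}) (R : 'I_m -> tup -> K) : Prop :=
  forall i j, consistent (X i) (R i) (X j) (R j).

Definition globally_consistent (m : nat) (X : 'I_m -> {set V}) (R : 'I_m -> tup -> K) : Prop :=
  exists T : Krel (\bigcup_(i < m) X i), forall i, kequiv (R i) (marg T (X i)).

Definition uniform_hg (k m : nat) (X : 'I_m -> {set V}) : Prop := forall i, #|X i| = k.
Definition regular_hg (d m : nat) (X : 'I_m -> {set V}) : Prop :=
  forall v : V, #|[set i | v \in X i]| = d.

Definition digit (d : nat) (emb : 'I_d -> D) (t : tup) (A : V) : option 'I_d :=
  [pick j : 'I_d | t A == Some (emb j)].

Definition modrel (d : nat) (emb : 'I_d -> D) (X : {set V}) (delta : nat) (t : tup) : K :=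
  if [forall A, if A \in X then digit emb t A != None else t A == None] &&
     ((\sum_(A in X) oapp (@nat_of_ord d) 0%N (digit emb t A)) == delta %[mod d])%N
  then 1 else 0.

End KRel.

(* Main.v *)
Require Import Defs.
From HB Require Import structures.
From mathcomp Require Import all_boot all_order all_algebra.
Set Implicit Arguments. Unset Strict Implicit. Unset Printing Implicit Defensive.
Import GRing.Theory.
Local Open Scope ring_scope.

Definition enc (V : finType) (D : eqType) (n : nat) (emb : 'I_n -> D)
  (Y : {set V}) (f : {ffun V -> 'I_n}) : tup V D :=
  [ffun A => if A \in Y then Some (emb (f A)) else None].

Lemma digit_enc (V : finType) (D : eqType) (n : nat) (emb : 'I_n -> D)
  (Y : {set V}) (f : {ffun V -> 'I_n}) A : injective emb ->
  digit emb (enc emb Y f) A = if A \in Y then Some (f A) else None.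
Proof.
move=> inj; rewrite /digit ffunE; case: ifP => HA.
  case: pickP => [j /eqP [] /inj -> //|/(_ (f A))]; by rewrite eqxx.
by case: pickP.
Qed.

Lemma restr_enc (V : finType) (D : eqType) (n : nat) (emb : 'I_n -> D)
  (Y U : {set V}) (f : {ffun V -> 'I_n}) : Y \subset U ->
  restr Y (enc emb U f) = enc emb Y f.
Proof.
move=> sYU; apply/ffunP => A; rewrite /restr /enc !ffunE.
by case: ifP => // /(subsetP sYU) ->.
Qed.

Lemma enc_eq (V : finType) (D : eqType) (n : nat) (emb : 'I_n -> D)
  (Y : {set V}) (f g : {ffun V -> 'I_n}) : injective emb ->
  enc emb Y f = enc emb Y g -> {in Y, f =1 g}.
Proof.
move=> inj e A HA; have := congr1 (fun t : tup V D => t A) e.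
by rewrite /enc !ffunE HA => [[]] /inj.
Qed.

Lemma enc_eqP (V : finType) (D : eqType) (n : nat) (emb : 'I_n -> D)
  (Y : {set V}) (f g : {ffun V -> 'I_n}) :
  {in Y, f =1 g} -> enc emb Y f = enc emb Y g.
Proof.
by move=> e; apply/ffunP => A; rewrite /enc !ffunE; case: ifP => // /e ->.
Qed.

Lemma sumconv (V : finType) n (Y : {set V}) (f : {ffun V -> 'I_n.+2}) (δ : nat) :
  ((\sum_(A in Y) val (f A)) == δ %[mod n.+2])%N = (\sum_(A in Y) f A == δ%:R).
Proof.
have -> : \sum_(A in Y) f A = (\sum_(A in Y) val (f A))%:R.
  by rewrite natr_sum; apply: eq_bigr => A _; rewrite natr_Zp.
set a := (\sum_(A in Y) _)%N.
apply/eqP/eqP => [H|H].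
  by apply: val_inj; rewrite !Zp_nat /=.
by have := congr1 val H; rewrite !Zp_nat /=.
Qed.

Definition good (V : finType) (D : eqType) (n : nat) (emb : 'I_n.+2 -> D)
  (Y : {set V}) (δ : nat) (t : tup V D) : bool :=
  [exists f : {ffun V -> 'I_n.+2}, (t == enc emb Y f) && (\sum_(A in Y) f A == δ%:R)].

Lemma modrelE (K : comNzSemiRingType) (V : finType) (D : eqType) (n : nat)
  (emb : 'I_n.+2 -> D) (Y : {set V}) (δ : nat) (t : tup V D) : injective emb ->
  modrel K emb Y δ t = if good emb Y δ t then 1 else 0.
Proof.
move=> inj; rewrite /modrel.
case: (boolP (good emb Y δ t)) => [/existsP [f /andP [/eqP -> Hs]] | Hng].
  rewrite ifT //; apply/andP; split.
    apply/forallP => A; rewrite digit_enc //; case: ifP => HA; by rewrite /enc ?ffunE HA.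
  rewrite (eq_bigr (fun A => val (f A))) ?sumconv // => A HA.
  by rewrite digit_enc // HA.
case: ifP => // /andP [/forallP H Hs]; exfalso; apply: (negP Hng).
pose g : {ffun V -> 'I_n.+2} := [ffun A => odflt ord0 (digit emb t A)].
have Ht : t = enc emb Y g.
  apply/ffunP => A; rewrite !ffunE; move: (H A); case: ifP => HA; last by move/eqP.
  rewrite /digit; case: pickP => [j /eqP -> //|] _; by rewrite eqxx.
apply/existsP; exists g; apply/andP; split; first exact/eqP.
rewrite -sumconv.
rewrite (eq_bigr (fun A => oapp (@nat_of_ord _) 0%N (digit emb t A))) // => A HA.
rewrite /g ffunE; move: (H A); rewrite HA; by case: (digit emb t A).
Qed.

Definition cr n (r δ : nat) : 'I_n.+2 := ((r == 0)%N * δ)%N%:R.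

Definition link (V : finType) n (x0 : V) (Y Z : {set V}) (δ δ' : nat)
  (f : {ffun V -> 'I_n.+2}) : bool :=
  all (fun r => f (nth x0 (enum (Z :\: Y)) r) + cr n r δ ==
                f (nth x0 (enum (Y :\: Z)) r) + cr n r δ') (iota 0 #|Y :\: Z|).

Definition cond (V : finType) n (x0 : V) (Y Z : {set V}) (δ δ' : nat)
  (f : {ffun V -> 'I_n.+2}) : bool :=
  [&& \sum_(A in Y) f A == δ%:R, \sum_(A in Z) f A == δ'%:R & link x0 Y Z δ δ' f].

Definition Tf (K : comNzSemiRingType) (V : finType) (D : eqType) n (emb : 'I_n.+2 -> D)
  (x0 : V) (Y Z : {set V}) (δ δ' : nat) (t : tup V D) : K :=
  if [exists f, (t == enc emb (Y :|: Z) f) && cond x0 Y Z δ δ' f] then 1 else 0.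

Definition Lst (V : finType) (D : eqType) n (emb : 'I_n.+2 -> D) (U : {set V}) :=
  [seq enc emb U f | f <- enum {ffun V -> 'I_n.+2}].

Lemma link_sym (V : finType) n (x0 : V) (Y Z : {set V}) (δ δ' : nat)
  (f : {ffun V -> 'I_n.+2}) : #|Y :\: Z| = #|Z :\: Y| ->
  link x0 Y Z δ δ' f = link x0 Z Y δ' δ f.
Proof. by move=> Hc; rewrite /link Hc; apply: eq_all => r; rewrite eq_sym. Qed.

Lemma cond_sym (V : finType) n (x0 : V) (Y Z : {set V}) (δ δ' : nat)
  (f : {ffun V -> 'I_n.+2}) : #|Y :\: Z| = #|Z :\: Y| ->
  cond x0 Y Z δ δ' f = cond x0 Z Y δ' δ f.
Proof.
move=> Hc; rewrite /cond link_sym //.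
by case: (_ == δ%:R); case: (_ == δ'%:R).
Qed.

Lemma Tf_sym (K : comNzSemiRingType) (V : finType) (D : eqType) n (emb : 'I_n.+2 -> D)
  (x0 : V) (Y Z : {set V}) (δ δ' : nat) (t : tup V D) : #|Y :\: Z| = #|Z :\: Y| ->
  Tf K emb x0 Y Z δ δ' t = Tf K emb x0 Z Y δ' δ t.
Proof.
move=> Hc; rewrite /Tf setUC; congr (if _ then _ else _).
by apply: eq_existsb => f; rewrite cond_sym.
Qed.

Lemma linksum (V : finType) n (x0 : V) (Y Z : {set V}) (δ δ' : nat)
  (f : {ffun V -> 'I_n.+2}) : #|Y :\: Z| = #|Z :\: Y| ->
  (#|Y :\: Z| = 0%N -> δ%:R = δ'%:R :> 'I_n.+2) -> link x0 Y Z δ δ' f ->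
  \sum_(A in Z :\: Y) f A + δ%:R = \sum_(A in Y :\: Z) f A + δ'%:R.
Proof.
move=> Hc H0 Hl; case En: #|Y :\: Z| => [|k].
  have e1 : Y :\: Z = set0 by apply: cards0_eq.
  have e2 : Z :\: Y = set0 by apply: cards0_eq; rewrite -Hc.
  by rewrite e1 e2 !big_set0 H0.
rewrite -!big_enum (big_nth x0) [in RHS](big_nth x0) -!cardE -Hc En.
have Hd : forall e : nat, e%:R = \sum_(0 <= i < k.+1) cr n i e.
  move=> e; rewrite big_ltn // /cr /= mul1n big1_seq ?addr0 // => i.
  move=> /andP [_]; rewrite mem_index_iota => /andP [Hi _].
  by case: i Hi.
rewrite (Hd δ) (Hd δ') -!big_split /=; apply: eq_big_nat => i Hi.
move/allP: Hl => /(_ i); rewrite mem_iota En add0n Hi => /(_ isT) /eqP.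
done.
Qed.

Lemma sumZ (V : finType) n (x0 : V) (Y Z : {set V}) (δ δ' : nat)
  (f : {ffun V -> 'I_n.+2}) : #|Y :\: Z| = #|Z :\: Y| ->
  (#|Y :\: Z| = 0%N -> δ%:R = δ'%:R :> 'I_n.+2) -> link x0 Y Z δ δ' f ->
  \sum_(A in Z) f A + δ%:R = \sum_(A in Y) f A + δ'%:R.
Proof.
move=> Hc H0 Hl; rewrite (@big_setID _ _ _ _ Z Y) [in RHS](@big_setID _ _ _ _ Y Z) setIC.
by rewrite -!addrA (linksum Hc H0 Hl).
Qed.

Definition ext (V : finType) n (x0 : V) (Y Z : {set V}) (δ δ' : nat)
  (g : {ffun V -> 'I_n.+2}) : {ffun V -> 'I_n.+2} :=
  [ffun A => if A \in Y then g A else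
     if A \in enum (Z :\: Y) then
       g (nth x0 (enum (Y :\: Z)) (index A (enum (Z :\: Y))))
       + cr n (index A (enum (Z :\: Y))) δ' - cr n (index A (enum (Z :\: Y))) δ
     else g A].

Lemma ext_agree (V : finType) n (x0 : V) (Y Z : {set V}) (δ δ' : nat)
  (g : {ffun V -> 'I_n.+2}) : {in Y, ext x0 Y Z δ δ' g =1 g}.
Proof. by move=> A HA; rewrite ffunE HA. Qed.

Lemma nthP_in (V : finType) (x0 : V) (Y Z : {set V}) r :
  (r < #|Y :\: Z|)%N -> nth x0 (enum (Y :\: Z)) r \in Y /\
   nth x0 (enum (Y :\: Z)) r \notin Z.
Proof.
move=> Hr; have : nth x0 (enum (Y :\: Z)) r \in enum (Y :\: Z).
  by apply: mem_nth; rewrite -cardE.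
by rewrite mem_enum inE => /andP [-> ->].
Qed.

Lemma ext_cond (V : finType) n (x0 : V) (Y Z : {set V}) (δ δ' : nat)
  (g : {ffun V -> 'I_n.+2}) : #|Y :\: Z| = #|Z :\: Y| ->
  (#|Y :\: Z| = 0%N -> δ%:R = δ'%:R :> 'I_n.+2) ->
  \sum_(A in Y) g A = δ%:R -> cond x0 Y Z δ δ' (ext x0 Y Z δ δ' g).
Proof.
move=> Hc H0 Hg.
have HY : \sum_(A in Y) ext x0 Y Z δ δ' g A = δ%:R.
  by rewrite -Hg; apply: eq_bigr => A HA; rewrite ext_agree.
have Hl : link x0 Y Z δ δ' (ext x0 Y Z δ δ' g).
  apply/allP => r; rewrite mem_iota add0n => /andP [_ Hr].
  have [PY _] := nthP_in x0 Hr.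
  have Hr' : (r < #|Z :\: Y|)%N by rewrite -Hc.
  have [QZ QY] := nthP_in x0 Hr'.
  have Qin : nth x0 (enum (Z :\: Y)) r \in enum (Z :\: Y).
    by apply: mem_nth; rewrite -cardE.
  rewrite (ext_agree _ _ _ _ _ PY) /ext ffunE (negbTE QY) Qin index_uniq ?enum_uniq -?cardE //.
  by rewrite subrK.
have HZ := sumZ Hc H0 Hl.
rewrite /cond HY eqxx Hl andbT /=.
by apply/eqP; apply: (@addIr _ δ%:R); rewrite HZ HY addrC.
Qed.

Lemma cond_uniq (V : finType) n (x0 : V) (Y Z : {set V}) (δ δ' : nat)
  (f1 f2 : {ffun V -> 'I_n.+2}) : #|Y :\: Z| = #|Z :\: Y| ->
  cond x0 Y Z δ δ' f1 -> cond x0 Y Z δ δ' f2 -> {in Y, f1 =1 f2} ->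
  {in Y :|: Z, f1 =1 f2}.
Proof.
move=> Hc /and3P [_ _ /allP L1] /and3P [_ _ /allP L2] e A.
case: (boolP (A \in Y)) => [HA _|HA]; first by apply: e.
rewrite inE (negbTE HA) /= => HZ.
have Ain : A \in enum (Z :\: Y) by rewrite mem_enum inE HA HZ.
set r := index A (enum (Z :\: Y)).
have Hr : (r < #|Y :\: Z|)%N by rewrite Hc cardE index_mem.
have [PY _] := nthP_in x0 Hr.
have HrI : r \in iota 0 #|Y :\: Z| by rewrite mem_iota add0n.
move: (L1 r HrI) (L2 r HrI); rewrite nth_index // => /eqP E1 /eqP E2.
apply: (@addIr _ (cr n r δ)); by rewrite E1 E2 e.
Qed.

Lemma margY (K : comNzSemiRingType) (V : finType) (D : eqType) n (emb : 'I_n.+2 -> D)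
  (x0 : V) (Y Z : {set V}) (δ δ' : nat) (u : tup V D) : injective emb ->
  #|Y :\: Z| = #|Z :\: Y| ->
  (#|Y :\: Z| = 0%N -> δ%:R = δ'%:R :> 'I_n.+2) ->
  \sum_(r <- undup (Lst emb (Y :|: Z)) | restr Y r == u) Tf K emb x0 Y Z δ δ' r
  = modrel K emb Y δ u.
Proof.
move=> inj Hc H0; rewrite modrelE //.
have sYU : Y \subset Y :|: Z by apply: subsetUl.
case: (boolP (good emb Y δ u)) => [/existsP [g /andP [/eqP -> /eqP Hg]] | Hng].
  set f := ext x0 Y Z δ δ' g.
  have Hf := ext_cond x0 Hc H0 Hg.
  set r0 := enc emb (Y :|: Z) f.
  have Hr0 : r0 \in undup (Lst emb (Y :|: Z)).
    by rewrite mem_undup; apply/mapP; exists f; rewrite ?mem_enum.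
  have res0 : restr Y r0 = enc emb Y g.
    by rewrite restr_enc //; apply: enc_eqP; apply: ext_agree.
  have T0 : Tf K emb x0 Y Z δ δ' r0 = 1.
    by rewrite /Tf ifT //; apply/existsP; exists f; rewrite eqxx Hf.
  rewrite -big_filter (bigD1_seq r0); last 2 first.
  - by rewrite mem_filter res0 eqxx Hr0.
  - by rewrite filter_uniq ?undup_uniq.
  rewrite T0 big1_seq; first by rewrite /= addr0.
  move=> r /andP [Hne]; rewrite mem_filter.
  move=> /andP [/eqP Hres _]; rewrite /Tf; case: ifP => //.
  move=> /existsP [f' /andP [/eqP Hr' Hc']]; exfalso; move/negP: Hne; apply.
  apply/eqP; rewrite Hr' /r0; apply: enc_eqP; apply: (cond_uniq Hc Hc' Hf).
  move=> A HA; rewrite ext_agree //.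
  move: Hres; rewrite Hr' restr_enc // => /(enc_eq inj) /(_ A HA) //.
rewrite big1_seq // => r /andP [/eqP Hres _]; rewrite /Tf; case: ifP => //.
move=> /existsP [f' /andP [/eqP Hr' Hc']]; exfalso; move/negP: Hng; apply.
apply/existsP; exists f'; rewrite -Hres Hr' restr_enc // eqxx /=.
by case/and3P: Hc'.
Qed.

Lemma margZ (K : comNzSemiRingType) (V : finType) (D : eqType) n (emb : 'I_n.+2 -> D)
  (x0 : V) (Y Z : {set V}) (δ δ' : nat) (u : tup V D) : injective emb ->
  #|Y :\: Z| = #|Z :\: Y| ->
  (#|Z :\: Y| = 0%N -> δ'%:R = δ%:R :> 'I_n.+2) ->
  \sum_(r <- undup (Lst emb (Y :|: Z)) | restr Z r == u) Tf K emb x0 Y Z δ δ' r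
  = modrel K emb Z δ' u.
Proof.
move=> inj Hc H0.
rewrite (eq_bigr (fun r => Tf K emb x0 Z Y δ' δ r)); last by move=> r _; apply: Tf_sym.
by rewrite setUC margY.
Qed.

Lemma psum0 (K : comNzSemiRingType) (T : eqType) : positive_semiring K ->
  forall (s : seq T) (P : pred T) (F : T -> K),
  \sum_(r <- s | P r) F r = 0 -> forall r, r \in s -> P r -> F r = 0.
Proof.
move=> [Kp _]; elim=> [|x s IH] P F //.
rewrite big_cons; case: ifP => Px.
  move=> /Kp [Fx Hs] r; rewrite inE => /orP [/eqP -> //|]; exact: IH.
move=> Hs r; rewrite inE => /orP [/eqP -> |]; first by rewrite Px.
exact: IH.
Qed.

Lemma card_setD0 (V : finType) (Y Z : {set V}) : #|Y| = #|Z| -> #|Y :\: Z| = 0%N -> Y = Z.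
Proof.
move=> Hc /cards0_eq /eqP; rewrite setD_eq0 => sYZ.
by apply/eqP; rewrite eqEcard sYZ Hc leqnn.
Qed.

Lemma cardD_eq (V : finType) (Y Z : {set V}) : #|Y| = #|Z| -> #|Y :\: Z| = #|Z :\: Y|.
Proof. by move=> Hc; rewrite !cardsD Hc setIC. Qed.

Local Close Scope ring_scope.

Theorem mainTheorem15
  (K : comNzSemiRingType) (V : finType) (D : eqType) (dom : V -> D -> Prop)
  (k d m : nat) (emb : 'I_d -> D) (X : 'I_m -> {set V}) :
  positive_semiring K ->
  (1 <= k)%N -> (2 <= d)%N -> (0 < m)%N ->
  injective emb -> (forall (A : V) (j : 'I_d), dom A (emb j)) ->
  injective X -> uniform_hg k X -> regular_hg d X ->
  pairwise_consistent dom X (fun i : 'I_m => modrel K emb (X i) (i == m.-1 :> nat)) /\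
  ~ globally_consistent dom X (fun i : 'I_m => modrel K emb (X i) (i == m.-1 :> nat)).
Proof.
move=> Kpos k1 d2 m0.
case: d emb d2 => [|[|n]] emb d2 //= inj domH Xinj unif reg.
pose i0 : 'I_m := Ordinal m0.
have [x0 Hx0] : exists x0 : V, x0 \in X i0.
  by apply/set0Pn; rewrite -card_gt0 unif.
split.
  move=> i j.
  set δi := nat_of_bool (i == m.-1 :> nat).
  set δj := nat_of_bool (j == m.-1 :> nat).
  have H1 : forall t, Tf K emb x0 (X i) (X j) δi δj t != 0%R ->
      t \in Lst emb (X i :|: X j).
    move=> t; rewrite /Tf; case: ifP => [/existsP [f /andP [/eqP -> _]] _|]; last first.
      by rewrite eqxx.
    by apply/mapP; exists f; rewrite ?mem_enum.
  have H2 : forall t, Tf K emb x0 (X i) (X j) δi δj t != 0%R ->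
      is_tup dom (X i :|: X j) t.
    move=> t; rewrite /Tf; case: ifP => [/existsP [f /andP [/eqP -> _]] _|]; last first.
      by rewrite eqxx.
    move=> A; rewrite /enc ffunE; case: (A \in X i :|: X j) => //; by exists (emb (f A)).
  exists (Build_Krel H1 H2).
  have Hc : #|X i :\: X j| = #|X j :\: X i| by apply: cardD_eq; rewrite !unif.
  split; exists 1%R, 1%R; split; rewrite ?oner_neq0 // => t; rewrite !mul1r /marg /=.
    rewrite margY //; move=> e.
    have /Xinj ij := card_setD0 (etrans (unif i) (esym (unif j))) e.
    by rewrite /δi /δj ij.
  rewrite margZ //; move=> e.
  have /Xinj ij := card_setD0 (etrans (unif j) (esym (unif i))) e.
  by rewrite /δi /δj ij.
move=> [T HT].
set δ := fun i : 'I_m => nat_of_bool (i == m.-1 :> nat).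
have ZK : forall a b : K, a != 0%R -> b != 0%R -> (a * b)%R != 0%R.
  move=> a b a0 b0; apply/eqP => /(proj2 Kpos) [] /eqP; by [rewrite (negbTE a0)|rewrite (negbTE b0)].
have [t Ht Hts] : exists2 t, T t != 0%R & t \in undup (ksupp T).
  pose g0 : {ffun V -> 'I_n.+2} := [ffun A => if A == x0 then ((δ i0)%:R)%R else 0%R].
  have Hu : modrel K emb (X i0) (δ i0) (enc emb (X i0) g0) = 1%R.
    rewrite modrelE // ifT //; apply/existsP; exists g0; rewrite eqxx /=.
    apply/eqP; rewrite (bigD1 x0 Hx0) /= /g0 ffunE eqxx big1 ?addr0 // => A /andP [_ /negbTE HA].
    by rewrite /g0 ffunE HA.
  have [a [b [a0 b0 E]]] := HT i0.
  move: (E (enc emb (X i0) g0)); rewrite Hu mulr1 => E0.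
  case: (boolP (has (fun r => T r != 0%R) (undup (ksupp T)))) => [/hasP [t Htin Ht]|/hasPn H].
    by exists t.
  exfalso; move: E0; rewrite /marg big1_seq ?mulr0 => [/eqP|r /andP [_ /H]].
    by rewrite (negbTE a0).
  by move/negPn/eqP.
pose g : {ffun V -> 'I_n.+2} := [ffun A => odflt ord0 (digit emb t A)].
have Hg : forall i, (\sum_(A in X i) g A)%R = ((δ i)%:R)%R.
  move=> i; have [a [b [a0 b0 E]]] := HT i.
  have Hm : marg T (X i) (restr (X i) t) != 0%R.
    apply/eqP => /(psum0 Kpos) /(_ t Hts) /(_ (eqxx _)) /eqP; by rewrite (negbTE Ht).
  have := E (restr (X i) t); rewrite modrelE //.
  case: ifP => [/existsP [f /andP [/eqP Hf /eqP Hs]] _|_]; last first.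
    by rewrite mulr0 => /esym/eqP; rewrite (negbTE (ZK _ _ b0 Hm)).
  rewrite -Hs; apply: eq_bigr => A HA; rewrite ffunE.
  have -> : digit emb t A = digit emb (restr (X i) t) A by rewrite /digit /restr ffunE HA.
  by rewrite Hf digit_enc // HA.
(* step 3: double counting *)
have Hn : ((n.+2)%:R : 'I_n.+2)%R = 0%R by apply: val_inj; rewrite Zp_nat /= modnn.
have L : (\sum_(i < m) \sum_(A in X i) g A)%R = 0%R.
  rewrite (eq_bigr (fun i => \sum_A (if A \in X i then g A else 0%R))%R); last first.
    by move=> i _; rewrite big_mkcond.
  rewrite exchange_big /= big1 // => A _.
  rewrite -big_mkcond /= (eq_bigl (fun i => i \in [set i | A \in X i])); last first.
    by move=> i; rewrite inE.
  by rewrite sumr_const reg -mulr_natr Hn mulr0.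
have im_lt : (m.-1 < m)%N by rewrite ltn_predL.
pose im : 'I_m := Ordinal im_lt.
have R1 : (\sum_(i < m) ((δ i)%:R : 'I_n.+2))%R = 1%R.
  rewrite (bigD1 im) //= /δ eqxx big1 ?addr0 // => i Hi.
  case: eqP => // Ei; exfalso; move/negP: Hi; apply; apply/eqP; exact: val_inj.
have E : (\sum_(i < m) ((δ i)%:R : 'I_n.+2))%R = (\sum_(i < m) \sum_(A in X i) g A)%R.
  by apply: eq_bigr => i _; rewrite Hg.
by move: E; rewrite R1 L => /eqP; rewrite oner_eq0.
Qed.
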